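(* Let $H$ be a topological group which is either completely metrizable or locally compact Hausdorff, let $G$ be a group with $|G|<2^{\aleph_0}$, and let $\phi:H\to G$ be a group homomorphism. Then there exists an open neighborhood $V$ of $1_H$ such that for every neighborhood $V'$ of $1_H$ with $V'\subseteq V$ we have $\phi(V')=\phi(V)$. *)

(* Defs.v *)
From HB Require Import structures.
From mathcomp Require Import all_boot all_order all_algebra.
From mathcomp Require Import all_classical all_reals all_analysis.
From Stdlib Require Rdefinitions.
Set Implicit Arguments. Unset Strict Implicit. Unset Printing Implicit Defensive.
Local Open Scope classical_set_scope.

Definition is_group (T : Type) (mul : T -> T -> T) (inv : T -> T) (one : T) : Prop :=
  (forall x y z, mul x (mul y z) = mul (mul x y) z) /\
  (forall x, mul one x = x) /\ (forall x, mul x one = x) /\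
  (forall x, mul (inv x) x = one) /\ (forall x, mul x (inv x) = one).

Definition is_topological_group (T : topologicalType)
  (mul : T -> T -> T) (inv : T -> T) (one : T) : Prop :=
  is_group mul inv one /\
  continuous (fun p : T * T => mul p.1 p.2) /\ continuous inv.

Definition completely_metrizable (T : topologicalType) : Prop :=
  exists d : T -> T -> Rdefinitions.R,
    (forall x y, Rdefinitions.Rle Rdefinitions.R0 (d x y)) /\
    (forall x y, d x y = Rdefinitions.R0 <-> x = y) /\
    (forall x y, d x y = d y x) /\
    (forall x y z, Rdefinitions.Rle (d x z) (Rdefinitions.Rplus (d x y) (d y z))) /\
    (forall A : set T, open A <->
       (forall x, A x -> exists eps, Rdefinitions.Rlt Rdefinitions.R0 eps /\
                   (forall y, Rdefinitions.Rlt (d x y) eps -> A y))) /\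
    (forall u : nat -> T,
       (forall eps, Rdefinitions.Rlt Rdefinitions.R0 eps -> exists N, forall m n, (N <= m)%N -> (N <= n)%N ->
          Rdefinitions.Rlt (d (u m) (u n)) eps) ->
       exists x, forall eps, Rdefinitions.Rlt Rdefinitions.R0 eps -> exists N, forall n, (N <= n)%N ->
          Rdefinitions.Rlt (d (u n) x) eps).

Definition locally_compact_hausdorff (T : topologicalType) : Prop :=
  hausdorff_space T /\ forall x : T, exists K : set T, compact K /\ nbhs x K.

(* |G| < 2^aleph_0 : there is no injection of the continuum (nat -> bool) into G. *)
Definition card_lt_continuum (G : Type) : Prop :=
  ~ exists f : (nat -> bool) -> G, injective f.

(* Main.v *)
Require Import Defs.
From HB Require Import structures.
From mathcomp Require Import all_boot all_order all_algebra.
From mathcomp Require Import all_classical all_reals all_analysis.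
From Stdlib Require Import Rdefinitions Raxioms RIneq Rtrigo_def Rbasic_fun Lra.
Set Implicit Arguments. Unset Strict Implicit.
Local Open Scope classical_set_scope.

Definition CP (T : topologicalType) := exists ok : nat -> set T -> Prop,
 (forall n (x : T) N, nbhs x N -> exists A, nbhs x A /\ A `<=` N /\ ok n A) /\
 (forall A : nat -> set T, (forall n, A n.+1 `<=` A n) -> (forall n, A n !=set0) ->
    (forall n, ok n (A n)) -> exists x, forall n, closure (A n) x).

Lemma nested_le (T : Type) (A : nat -> set T) : (forall n, A n.+1 `<=` A n) ->
  forall m n, (n <= m)%N -> A m `<=` A n.
Proof.
move=> hn; elim=> [|m IH] n.
  by rewrite leqn0 => /eqP->.
rewrite leq_eqVlt => /orP[/eqP->//|]; rewrite ltnS => /IH h y /hn /h //.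
Qed.

Lemma archi_inv (eps : R) : Rlt R0 eps -> exists N : nat, Rlt (Rinv (INR N.+1)) eps.
Proof.
move=> he; have [N0 [h1 h2]] := archimed_cor1 eps he.
exists N0; apply: Rle_lt_trans h1; apply: Rinv_le_contravar.
  exact: lt_0_INR h2.
by apply: le_INR; apply/leP.
Qed.

Lemma inv_pos (n : nat) : Rlt R0 (Rinv (INR n.+1)).
Proof. by apply: Rinv_0_lt_compat; apply: lt_0_INR; apply/ltP. Qed.
Local Open Scope R_scope.
Lemma CP_metric (T : topologicalType) : completely_metrizable T -> CP T.
Proof.
move=> [d [hpos [hzero [hsym [htri [hopen hcompl]]]]]].
exists (fun n A => forall y z, A y -> A z -> Rlt (d y z) (Rinv (INR n.+1))); split.
- move=> n x N hN; rewrite nbhsE in hN; case: hN => Ob [oO Ox] sub.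
  have [eps [epsp hb]] := (proj1 (hopen Ob)) oO x Ox.
  have hn := inv_pos n.
  pose r := Rmin eps (Rinv (INR n.+1) / 2).
  have rp : Rlt R0 r by apply: Rmin_glb_lt; lra.
  have r1 : Rle r eps by apply: Rmin_l.
  have r2 : Rle r (Rinv (INR n.+1) / 2) by apply: Rmin_r.
  exists [set y | Rlt (d x y) r]; split; [|split].
  + apply: open_nbhs_nbhs; split.
      apply/(proj2 (hopen _)) => y /= hy; exists (r - d x y); split; first lra.
      move=> z hz /=; have := htri x y z; lra.
    by rewrite /= (proj2 (hzero x x) erefl).
  + by move=> y /= hy; apply: sub; apply: hb; lra.
  + move=> y z hy hz; have hy1 : Rlt (d x y) r := hy; have hz1 : Rlt (d x z) r := hz.
    have := htri y x z; rewrite (hsym y x); lra.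
- move=> A hn hne hok.
  have [a ha] := choice (fun n => hne n).
  have hle := nested_le hn.
  have [x hx] : exists x, forall eps, Rlt R0 eps -> exists N : nat, forall n : nat, leq N n ->
          Rlt (d (a n) x) eps.
    apply: hcompl => eps epsp; have [N hN] := archi_inv epsp.
    exists N => m k hm hk; apply: Rlt_trans hN.
    exact: hok N (a m) (a k) (hle _ _ hm _ (ha m)) (hle _ _ hk _ (ha k)).
  exists x => n B; rewrite nbhsE => -[Ob [oO Ox] sub].
  have [eps [epsp hb]] := (proj1 (hopen Ob)) oO x Ox.
  have [N hN] := hx eps epsp.
  exists (a (maxn N n)); split.
    exact: hle _ _ (leq_maxr N n) _ (ha _).
  apply: sub; apply: hb; rewrite hsym; exact: hN _ (leq_maxl N n).
Qed.
Local Close Scope R_scope.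
Lemma CP_lch (T : topologicalType) : locally_compact_hausdorff T -> CP T.
Proof.
move=> [_ hlc].
exists (fun _ A => exists K : set T, compact K /\ A `<=` K); split.
- move=> n x N hN; have [K [cK hK]] := hlc x.
  exists (N `&` K); split; first exact: filterI.
  split; first by move=> ? [].
  by exists K; split => // ? [].
- move=> A hn hne hok.
  have [K [cK sub]] := hok 0%N.
  have hle := nested_le hn.
  have FF : Filter (filter_from setT A).
    apply: filter_fromT_filter; first by exists 0%N.
    move=> i j; exists (maxn i j) => y hy; split.
      exact: hle _ _ (leq_maxl i j) _ hy.
    exact: hle _ _ (leq_maxr i j) _ hy.
  have PF := filter_from_proper FF (fun i _ => hne i).
  have [x [Kx clx]] := cK _ PF (ex_intro2 _ _ 0%N I sub).
  exists x => n B hB; apply: clx hB.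
  by exists n.
Qed.

Fixpoint stf (T : Type) (f : nat * set T -> set T * set T) (s : nat -> bool) (n : nat) : set T :=
  match n with
  | 0 => setT
  | m.+1 => if s m then (f (m, stf f s m)).2 else (f (m, stf f s m)).1
  end.

Lemma stfS (T : Type) (f : nat * set T -> set T * set T) s n :
  stf f s n.+1 = if s n then (f (n, stf f s n)).2 else (f (n, stf f s n)).1.
Proof. by []. Qed.

Theorem proposition3p5
  (H : topologicalType) (mulH : H -> H -> H) (invH : H -> H) (oneH : H)
  (hH : is_topological_group mulH invH oneH)
  (hHsp : completely_metrizable H \/ locally_compact_hausdorff H)
  (G : Type) (mulG : G -> G -> G) (invG : G -> G) (oneG : G)
  (hG : is_group mulG invG oneG)
  (hcard : card_lt_continuum G)
  (phi : H -> G) (hphi : forall x y, phi (mulH x y) = mulG (phi x) (phi y)) :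
  exists V : set H, open V /\ V oneH /\
    forall V' : set H, nbhs oneH V' -> V' `<=` V -> phi @` V' = phi @` V.
Proof.
have hCP : CP H by case: hHsp => [/CP_metric|/CP_lch].
case: hCP => ok [hok1 hok2].
case: hH => [[hassoc [h1l [h1r [hinvl hinvr]]]] [hmulc hinvc]].
case: hG => [gassoc [g1l [g1r [ginvl ginvr]]]].
have T1 : forall x y N, nbhs (mulH x y) N -> exists P Q, nbhs x P /\ nbhs y Q /\
    forall a b, P a -> Q b -> N (mulH a b).
  move=> x y N hN; have := hmulc (x, y) _ hN; case=> [[P Q]] /= [hP hQ] sub.
  exists P, Q; split=> //; split=> // a b Pa Qb; exact: (sub (a, b)).
have T2 : forall x N, nbhs (invH x) N -> nbhs x [set z | N (invH z)].
  move=> x N hN; exact: (hinvc x _ hN).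
have TL : forall a y N, nbhs (mulH a y) N -> nbhs y [set z | N (mulH a z)].
  move=> a y N /T1 [P [Q [hP [hQ hPQ]]]].
  apply: filterS hQ => z Qz; exact: hPQ _ _ (nbhs_singleton hP) Qz.
have inv1 : invH oneH = oneH by rewrite -[RHS](hinvr oneH) h1l.
have cancelL : forall a z, mulH a (mulH (invH a) z) = z.
  by move=> a z; rewrite hassoc hinvr h1l.
have cancelL' : forall a z, mulH (invH a) (mulH a z) = z.
  by move=> a z; rewrite hassoc hinvl h1l.
have Elem : forall W, nbhs oneH W -> exists E, nbhs oneH E /\
    forall e1 e2, E e1 -> E e2 -> W (mulH e1 (invH e2)).
  move=> W hW; have : nbhs (mulH oneH (invH oneH)) W by rewrite inv1 h1l.
  move/T1 => [P [Q [hP [hQ hPQ]]]].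
  have hQ' := T2 _ _ hQ.
  exists (P `&` [set z | Q (invH z)]); split; first exact: filterI.
  by move=> e1 e2 [? _] [_ ?]; apply: hPQ.
have reg : forall (y : H) (N : set H), nbhs y N -> exists A, nbhs y A /\ closure A `<=` N.
  move=> y N hN.
  have : nbhs (mulH oneH oneH) [set v | N (mulH y v)].
    by rewrite h1l; apply: TL; rewrite h1r.
  move/T1 => [P [Q [hP [hQ hPQ]]]].
  have hM : nbhs oneH (P `&` Q) := filterI hP hQ.
  exists [set z | (P `&` Q) (mulH (invH y) z)]; split.
    by apply: (TL (invH y) y (P `&` Q)); rewrite hinvl; exact: hM.
  move=> z hz.
  have hB : nbhs z [set w | (P `&` Q) (mulH (invH w) z)].
    have : nbhs (mulH (invH z) z) (P `&` Q) by rewrite hinvl; exact: hM.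
    move/T1 => [P' [Q' [hP' [hQ' hPQ']]]].
    apply: filterS (T2 _ _ hP') => w hw; exact: hPQ' _ _ hw (nbhs_singleton hQ').
  have [w [hw1 hw2]] := hz _ hB.
  have := hPQ _ _ (proj1 hw1) (proj2 hw2).
  by rewrite /= -hassoc cancelL cancelL.
have good : forall n (y : H) (N : set H), nbhs y N -> exists A, nbhs y A /\ closure A `<=` N /\ ok n A.
  move=> n y N /reg [A1 [hA1 clA1]].
  have [A [hA [sub okA]]] := hok1 n y A1 hA1.
  exists A; split=> //; split=> //.
  by apply: subset_trans clA1; apply: closure_subset.
have phi1 : phi oneH = oneG.
  have e : phi oneH = mulG (phi oneH) (phi oneH) by rewrite -hphi h1l.
  by rewrite -[LHS]g1l -(ginvl (phi oneH)) -gassoc -e.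
have Gcancel : forall a b c, mulG a b = mulG a c -> b = c.
  move=> a b c e; have := congr1 (mulG (invG a)) e.
  by rewrite !gassoc ginvl !g1l.
apply: contrapT => hno.
have NH : forall V : set H, open V -> V oneH -> exists g, V g /\ exists W, nbhs oneH W /\
    W `<=` V /\ forall w, W w -> phi w <> phi g.
  move=> V oV V1.
  have [V' [hV' [sub neq]]] : exists V', nbhs oneH V' /\ V' `<=` V /\ phi @` V' <> phi @` V.
    apply: contrapT => h; apply: hno; exists V; split=> //; split=> // V' h1 h2.
    by apply: contrapT => h3; apply: h; exists V'.
  apply: contrapT => h; apply: neq; apply/seteqP; split.
    by move=> _ [v hv <-]; exists v => //; apply: sub.
  move=> _ [g Vg <-]; apply: contrapT => hg; apply: h; exists g; split=> //.
  exists V'; split=> //; split=> // w Ww e; apply: hg; by exists w.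
have step : forall (n : nat) (C : set H), (exists p : H, nbhs p C) -> exists C0 C1 : set H,
   [/\ (exists p : H, nbhs p C0), (exists p : H, nbhs p C1), closure C0 `<=` C, closure C1 `<=` C &
      [/\ ok n C0, ok n C1 & forall a b, C0 a -> C1 b -> phi a <> phi b]].
  move=> n C [p hp].
  have hS1 : nbhs oneH [set v | C (mulH p v)] by apply: TL; rewrite h1r.
  have [g [Vg [W [hW [WV hWg]]]]] :=
     NH _ (@open_interior _ [set v | C (mulH p v)]) hS1.
  have [E [hE hEW]] := Elem W hW.
  have hC0 : nbhs p (C `&` [set z | E (mulH (invH p) z)]).
    apply: filterI hp _; apply: (TL (invH p) p E); rewrite hinvl; exact: hE.
  have hC1 : nbhs (mulH p g) (C `&` [set z | E (mulH (invH g) (mulH (invH p) z))]).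
    apply: filterI.
      have : nbhs (mulH (invH p) (mulH p g)) [set v | C (mulH p v)].
        rewrite cancelL'; exact: Vg.
      move/TL; apply: filterS => z /=; by rewrite cancelL.
    apply: (TL (invH p) _ [set v | E (mulH (invH g) v)]); rewrite cancelL'.
    apply: (TL (invH g) g E); rewrite hinvl; exact: hE.
  have [C0 [hC0' [cl0 ok0]]] := good n _ _ hC0.
  have [C1 [hC1' [cl1 ok1]]] := good n _ _ hC1.
  exists C0, C1; split => //.
  - by exists p.
  - by exists (mulH p g).
  - by move=> z /cl0 [].
  - by move=> z /cl1 [].
  split=> // a b Ca Cb hab.
  have [_ Ea] := cl0 _ (subset_closure Ca).
  have [_ Eb] := cl1 _ (subset_closure Cb).
  have [e1 he1] : exists e1, e1 = mulH (invH p) a by eexists.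
  have [e2 he2] : exists e2, e2 = mulH (invH g) (mulH (invH p) b) by eexists.
  rewrite /= -he1 in Ea; rewrite /= -he2 in Eb.
  apply: (hWg (mulH e1 (invH e2))); first exact: hEW.
  have ha : a = mulH p e1 by rewrite he1 cancelL.
  have hb : b = mulH p (mulH g e2) by rewrite he2 !cancelL.
  rewrite ha hb !hphi in hab.
  have he := Gcancel _ _ _ hab.
  by rewrite hphi he -gassoc -hphi hinvr phi1 g1r.
pose Q := fun (n : nat) (C C0 C1 : set H) =>
   [/\ (exists p : H, nbhs p C0), (exists p : H, nbhs p C1), closure C0 `<=` C, closure C1 `<=` C &
      [/\ ok n C0, ok n C1 & forall a b, C0 a -> C1 b -> phi a <> phi b]].
have hex : forall nC : nat * set H, exists CC : set H * set H,
    (exists p : H, nbhs p nC.2) -> Q nC.1 nC.2 CC.1 CC.2.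
  move=> [n C]; case: (pselect (exists p : H, nbhs p C)) => hC; last by exists (set0, set0).
  have [C0 [C1 hh]] := step n C hC; by exists (C0, C1).
have [f hf] := choice hex.
have inv : forall s n, exists p : H, nbhs p (stf f s n).
  move=> s; elim=> [|n IH]; first by exists oneH; apply: filterT.
  have [h0 h1 _ _ _] := hf (n, stf f s n) IH.
  by rewrite stfS; case: (s n).
have hx : forall s, exists x, forall n, stf f s n.+1 x.
  move=> s.
  have hQ : forall n, Q n (stf f s n) (f (n, stf f s n)).1 (f (n, stf f s n)).2.
    by move=> n; apply: (hf (n, stf f s n)); apply: inv.
  have a1 : forall n, stf f s n.+2 `<=` stf f s n.+1.
    move=> n; have [_ _ c0 c1 _] := hQ n.+1.
    by rewrite [stf f s n.+2]stfS; case: (s n.+1) => y hy; [apply: c1 | apply: c0];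
      apply: subset_closure.
  have a2 : forall n, stf f s n.+1 !=set0.
    by move=> n; have [p hp] := inv s n.+1; exists p; apply: nbhs_singleton hp.
  have a3 : forall n, ok n (stf f s n.+1).
    by move=> n; have [_ _ _ _ [q0 q1 _]] := hQ n; rewrite stfS; case: (s n).
  have [x hx] := hok2 (fun n => stf f s n.+1) a1 a2 a3.
  exists x => n; have [_ _ c0 c1 _] := hQ n.+1.
  have := hx n.+1; change (closure (stf f s n.+2) x -> stf f s n.+1 x); rewrite [stf f s n.+2]stfS.
  by case: (s n.+1) => hh; [apply: c1 | apply: c0].
have [xs hxs] := choice hx.
apply: hcard; exists (fun s => phi (xs s)) => s t /= he.
apply: contrapT => hst.
have [n0 hn0] : exists n, s n != t n.
  apply: contrapT => h; apply: hst; apply: funext => n; apply: contrapT => hn.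
  by apply: h; exists n; apply/eqP.
have [n hn hmin] := ex_minnP (ex_intro (fun n => s n != t n) n0 hn0).
have agree : forall m, (m <= n)%N -> stf f s m = stf f t m.
  elim=> [//|m IH] hm.
  have e : s m = t m.
    apply: contrapT => h; have := hmin m (introN eqP h); by rewrite leqNgt hm.
  by rewrite !stfS IH ?(ltnW hm) // e.
have e := agree n (leqnn n).
have hs := hxs s n; have ht := hxs t n.
rewrite stfS in hs; rewrite stfS -e in ht.
have [_ _ _ _ [_ _ hd]] := hf (n, stf f s n) (inv s n).
move: hn hs ht; case: (s n); case: (t n) => //= _ hs ht.
  exact: hd _ _ ht hs (esym he).
exact: hd _ _ hs ht he.
Qed.
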